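(* Let $(F,\cdot)$ be a scalar group and let $\boxplus$ be an operation such that $(F,\boxplus,\cdot)$ is a left near-field. Then $0$ is the identity element of $(F,\boxplus)$. For every $\alpha\in F$, the additive inverse of $\alpha$ with respect to $\boxplus$ is either $-\alpha$ or $\alpha$, and if it is $\alpha$ (rather than $-\alpha$) then $1\boxplus1=0$. Moreover, $\alpha\cdot(-1)=(-1)\cdot\alpha$ for all $\alpha\in F$.
   Context: A scalar group is a tuple $(F,\cdot,1,0,-1)$ where $(F,\cdot,1)$ is a monoid, $0\ne1$, $0\alpha=\alpha0=0$, $\{1,-1\}$ is exactly the solution set of $x^2=1$, and $(F\setminus\{0\},\cdot)$ is a group; $-\alpha:=(-1)\cdot\alpha$. A left near-field $(F,\boxplus,\cdot)$: $(F,\boxplus)$ a group, $(F\setminus\{0'\},\cdot)$ a group where $0'$ is the $\boxplus$-identity, $0'\cdot\alpha=0'$, and $\gamma(\alpha\boxplus\beta)=\gamma\alpha\boxplus\gamma\beta$. *)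

(* Defs.v *)
Definition is_scalar_group {F : Type} (mul : F -> F -> F) (one zero m1 : F) : Prop :=
  (forall a b c, mul a (mul b c) = mul (mul a b) c) /\
  (forall a, mul one a = a /\ mul a one = a) /\
  zero <> one /\
  (forall a, mul zero a = zero /\ mul a zero = zero) /\
  (forall x, mul x x = one <-> (x = one \/ x = m1)) /\
  (forall a b, a <> zero -> b <> zero -> mul a b <> zero) /\
  (forall a, a <> zero -> exists b, b <> zero /\ mul a b = one /\ mul b a = one).

Definition is_left_near_field {F : Type} (add mul : F -> F -> F) : Prop :=
  exists z' : F,
    (forall a b c, add a (add b c) = add (add a b) c) /\
    (forall a, add z' a = a /\ add a z' = a) /\
    (forall a, exists b, add a b = z' /\ add b a = z') /\
    (forall a b, a <> z' -> b <> z' -> mul a b <> z') /\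
    (forall a b c, mul a (mul b c) = mul (mul a b) c) /\
    (exists e, e <> z' /\
       (forall a, a <> z' -> mul e a = a /\ mul a e = a) /\
       (forall a, a <> z' -> exists b, b <> z' /\ mul a b = e /\ mul b a = e)) /\
    (forall a, mul z' a = z') /\
    (forall g a b, mul g (add a b) = add (mul g a) (mul g b)).

(* Main.v *)
Require Import Defs.
From Stdlib Require Import Classical.

Theorem mainTheorem13 (F : Type) (mul add : F -> F -> F) (one zero m1 : F)
  (Hsg : is_scalar_group mul one zero m1)
  (Hnf : is_left_near_field add mul) :
  (* 0 is the identity of (F, add) *)
  (forall a, add zero a = a /\ add a zero = a) /\
  (* the additive inverse of a is -a or a *)
  (forall a b, add a b = zero /\ add b a = zero -> b = mul m1 a \/ b = a) /\
  (* if the inverse of a is a (rather than -a), then 1 + 1 = 0 *)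
  (forall a, add a a = zero -> a <> mul m1 a -> add one one = zero) /\
  (* a * (-1) = (-1) * a *)
  (forall a, mul a m1 = mul m1 a).
Proof.
  destruct Hsg as [A [I [Z1 [Z [S [_ V]]]]]].
  destruct Hnf as [z [AA [AI [AV [_ [_ [_ [Zl D]]]]]]]].
  assert (Ez : z = zero).
  { rewrite <- (proj2 (Z z)). rewrite Zl. reflexivity. }
  subst z.
  assert (Uniq : forall a b c, add a b = zero -> add c a = zero -> b = c).
  { intros a b c H1 H2. rewrite <- (proj2 (AI c)), <- H1, AA, H2, (proj1 (AI b)).
    reflexivity. }
  destruct (AV one) as [n [Hn1 Hn2]].
  assert (Hinv : forall a, add a (mul a n) = zero /\ add (mul a n) a = zero).
  { intro a. split.
    - rewrite <- (proj2 (I a)) at 1. rewrite <- D, Hn1. apply (proj2 (Z a)).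
    - rewrite <- (proj2 (I a)) at 2. rewrite <- D, Hn2. apply (proj2 (Z a)). }
  assert (Hnn : mul n n = one).
  { apply (Uniq n). apply Hinv. exact Hn1. }
  assert (Hm11 : mul m1 m1 = one) by (apply S; right; reflexivity).
  assert (Comm : forall a, mul a m1 = mul m1 a).
  { intro a. destruct (classic (a = zero)) as [Ha|Ha].
    - subst a. rewrite (proj1 (Z m1)), (proj2 (Z m1)). reflexivity.
    - destruct (V a Ha) as [ai [_ [H1 H2]]].
      set (b := mul ai (mul m1 a)).
      assert (Hb : mul b b = one).
      { unfold b. rewrite !A.
        replace (mul (mul (mul ai m1) a) ai) with (mul ai m1)
          by (rewrite <- A, H1, (proj2 (I _)); reflexivity).
        rewrite <- (A ai m1 m1), Hm11, (proj2 (I ai)). exact H2. }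
      assert (Hab : mul a b = mul m1 a).
      { unfold b. rewrite A, H1, (proj1 (I _)). reflexivity. }
      apply S in Hb. destruct Hb as [Hb|Hb].
      + rewrite Hb, (proj2 (I a)) in Hab.
        assert (Hm : m1 = one).
        { rewrite <- (proj2 (I m1)), <- H1, A, <- Hab, H1. reflexivity. }
        rewrite Hm, (proj1 (I a)), (proj2 (I a)). reflexivity.
      + rewrite <- Hb at 1. exact Hab. }
  assert (Hn : n = one \/ n = m1) by (apply S; exact Hnn).
  split; [|split; [|split]].
  - exact AI.
  - intros a b [Hab Hba].
    assert (Eb : mul a n = b) by (symmetry; apply (Uniq a); [exact Hab | apply Hinv]).
    destruct Hn as [Hn|Hn]; rewrite Hn in Eb.
    + right. rewrite <- Eb. apply (proj2 (I a)).
    + left. rewrite <- Eb. apply Comm.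
  - intros a Haa Hne.
    destruct Hn as [Hn|Hn].
    + rewrite <- Hn at 2. exact Hn1.
    + exfalso. apply Hne.
      assert (Eb : mul a n = a) by (symmetry; apply (Uniq a); [exact Haa | apply Hinv]).
      rewrite Hn, Comm in Eb. symmetry; exact Eb.
  - exact Comm.
Qed.
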